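(* The DRIMA factorization does not guarantee the RIGM principle for the CVaR metric. Precisely: there exist a number of agents $N$, finite action sets, a function $Q_{mix}:\mathbb{R}^N\to\mathbb{R}$ nondecreasing in each argument, per-agent return distributions $[Z_i(\tau_i,u_i)]_{i=1}^N$ with quantile functions $\theta_i(\tau_i,u_i,\omega)$, and a risk level $\alpha\in(0,1]$ such that, letting $Z_{tran}(\boldsymbol\tau,\boldsymbol u)$ be the return distribution with quantile function $\theta_{tran}(\boldsymbol\tau,\boldsymbol u,\omega)=Q_{mix}(\theta_1(\tau_1,u_1,\omega),\dots,\theta_N(\tau_N,u_N,\omega))$, $\omega\in(0,1]$, the utilities $[Z_i]_{i=1}^N$ do not satisfy RIGM for $Z_{tran}$ with risk metric $\mathrm{CVaR}_\alpha$.
   Context: There are $N$ agents; agent $i$ has observation history $\tau_i$ and finite action set $U_i$; $\boldsymbol\tau=(\tau_1,\dots,\tau_N)$, $\boldsymbol u=(u_1,\dots,u_N)$. For a real random variable $Z$ with CDF $F_Z$, its quantile function is $\theta_Z(\omega)=\inf\{z\in\mathbb{R}:\omega\le F_Z(z)\}$, $\omega\in(0,1]$. $\mathrm{CVaR}_\alpha(Z)=\frac1\alpha\int_0^\alpha\theta_Z(\omega)\,d\omega$ (the distortion risk measure with distortion $g(\omega)=\min(\omega/\alpha,1)$; $\mathrm{CVaR}_1=\mathbb{E}$). RIGM: given a risk metric $\psi$, per-agent return distributions $[Z_i(\tau_i,u_i)]$ satisfy RIGM for a joint return distribution $Z(\boldsymbol\tau,\boldsymbol u)$ with $\psi$ under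 $\boldsymbol\tau$ if $\arg\max_{\boldsymbol u}\psi[Z(\boldsymbol\tau,\boldsymbol u)]=(\arg\max_{u_1}\psi[Z_1(\tau_1,u_1)],\dots,\arg\max_{u_N}\psi[Z_N(\tau_N,u_N)])$. Argmax sets are assumed to be singletons (ties broken by smallest index). *)

(* Defs.v *)
(* Return distributions are represented by their
   quantile functions theta : R -> R (only the values on (0,1] matter). *)
From HB Require Import structures.
From mathcomp Require Import all_boot all_order all_algebra.
From mathcomp Require Import all_classical all_reals.
From mathcomp Require Import topology normedtype sequences measure
  lebesgue_measure lebesgue_integral.
From mathcomp Require Import Rstruct Rstruct_topology.

Set Implicit Arguments.
Unset Strict Implicit.
Unset Printing Implicit Defensive.
Import Order.TTheory GRing.Theory Num.Theory.
Import numFieldNormedType.Exports.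
Local Open Scope classical_set_scope.
Local Open Scope ring_scope.

Definition is_quantile (R : realType) (th : R -> R) : Prop :=
  (forall x y : R, 0 < x -> x <= y -> y <= 1 -> th x <= th y) /\
  (forall w : R, 0 < w -> w <= 1 -> th x @[x --> w^'-] --> th w).

Definition CVaR (R : realType) (alpha : R) (th : R -> R) : \bar R :=
  ((alpha^-1)%:E * \int[@lebesgue_measure R]_(w in `]0%R, alpha]%classic) (th w)%:E)%E.

Definition argmax_set (A : Type) (R : realType) (f : A -> \bar R) : set A :=
  [set u | forall v, (f v <= f u)%E].

Definition is_singleton (A : Type) (S : set A) : Prop :=
  exists x, S = [set x].

Definition mix_monotone (R : realType) (N : nat) (Q : ('I_N -> R) -> R) : Prop :=
  forall x y : 'I_N -> R, (forall i, x i <= y i) -> Q x <= Q y.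

Definition joint_action (N : nat) (n : 'I_N -> nat) : Type :=
  forall i : 'I_N, 'I_(n i).

(* RIGM for risk metric psi (given as a map from quantile functions to \bar R),
   per-agent quantile functions thi (at fixed histories) and joint quantile
   function thJ (at the fixed joint history). *)
Definition RIGM (R : realType) (N : nat) (n : 'I_N -> nat)
    (psi : (R -> R) -> \bar R)
    (thi : forall i : 'I_N, 'I_(n i) -> R -> R)
    (thJ : joint_action n -> R -> R) : Prop :=
  argmax_set (fun u : joint_action n => psi (thJ u)) =
  [set u : joint_action n | forall i, argmax_set (fun a => psi (thi i a)) (u i)].

(* Main.v *)
Require Import Defs.
From HB Require Import structures.
Set Warnings "-all".
From mathcomp Require Import all_boot all_order all_algebra.
From mathcomp Require Import all_classical all_reals.
From mathcomp Require Import topology normedtype sequences measure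
  lebesgue_measure lebesgue_integral.
From mathcomp Require Import Rstruct Rstruct_topology.
From mathcomp Require Import lra.
Import Order.TTheory GRing.Theory Num.Theory.
Import numFieldNormedType.Exports.
Local Open Scope classical_set_scope.
Local Open Scope ring_scope.

Section S.
Variable R : realType.
Definition step (a b : R) (x : R) : R := if x <= 1/2 then a else b.

Lemma step_quantile a b : a <= b -> is_quantile (step a b).
Proof.
move=> ab; split.
  move=> x y x0 xy y1; rewrite /step.
  case: ifP => hx; case: ifP => hy //.
  by move: hx; rewrite (le_trans xy hy).
move=> w w0 w1; rewrite /step.
case: ifP => hw.
  apply: cvg_near_cst; near=> x.
  have xw : x < w by near: x; exact: nbhs_left_lt.
  by rewrite ifT // (le_trans (ltW xw) hw).
apply: cvg_near_cst; near=> x.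
have xw : 1/2 < x by near: x; apply: nbhs_left_gt; rewrite ltNge hw.
by rewrite ifF //; apply/negbTE; rewrite -ltNge.
Unshelve. all: end_near.
Qed.

Lemma step_int (a b : R) :
  (\int[@lebesgue_measure R]_(w in `]0%R, 1%R]) (step a b w)%:E = ((a + b)/2)%:E)%E.
Proof.
have h0 : (BRight (0:R) <= BRight (1/2))%O by rewrite bnd_simp; lra.
have h1 : (BRight (1/2:R) <= BRight 1)%O by rewrite bnd_simp; lra.
rewrite (itv_bndbnd_setU h0 h1).
have eA : {in `]0, 1/2]%classic, (fun w => (step a b w)%:E) =1 cst a%:E}.
  by move=> x /set_mem; rewrite /= in_itv /= /step => /andP[_ ->].
have eB : {in `]1/2, 1]%classic, (fun w => (step a b w)%:E) =1 cst b%:E}.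
  by move=> x /set_mem; rewrite /= in_itv /= /step => /andP[h _]; rewrite ifF // leNgt h.
rewrite integral_setU //; last 2 first.
- apply/measurable_funU => //; split.
    eapply eq_measurable_fun.
      by move=> x hx; rewrite eA; [reflexivity|exact: hx].
    exact: measurable_cst.
  eapply eq_measurable_fun.
    by move=> x hx; rewrite eB; [reflexivity|exact: hx].
  exact: measurable_cst.
- apply: lt_disjoint => x y; rewrite !in_itv /= => /andP[_ h] /andP[h' _].
  exact: le_lt_trans h h'.
under eq_integral => x hx do rewrite eA //.
under [X in (_ + X)%E]eq_integral => x hx do rewrite eB //.
rewrite !integral_cst //.
have L1 := @lebesgue_measure_itv R `]0, 1/2]. have L2 := @lebesgue_measure_itv R `]1/2, 1].
rewrite /= ifT in L1; last by rewrite lte_fin; lra.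
rewrite /= ifT in L2; last by rewrite lte_fin; lra.
set m1 := (X in (_ * X + _)%E).
set m2 := (X in (_ + _ * X)%E).
have -> : m1 = ((1/2:R)%:E - 0%:E)%E by exact: L1.
have -> : m2 = (1%:E - (1/2:R)%:E)%E by exact: L2.
rewrite -!EFinB -!EFinM -EFinD; congr EFin; lra.
Qed.
Lemma min_step a b c w : Num.min (step a b w) c = step (Num.min a c) (Num.min b c) w.
Proof. by rewrite /step; case: ifP. Qed.

Lemma CVaR1_step a b : CVaR 1 (step a b) = ((a + b) / 2)%:E.
Proof. by rewrite /CVaR invr1 mul1e step_int. Qed.

Definition vA (a : 'I_2) : R := if val a == 0%N then 0 else -1.
Definition vB (a : 'I_2) : R := if val a == 0%N then 0 else 2.
End S.

Definition a1 : 'I_2 := @Ordinal 2 1 isT.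

Theorem theorem3 :
  exists (N : nat) (n : 'I_N -> nat) (Hist : Type) (tau : 'I_N -> Hist)
    (Qmix : ('I_N -> Rdefinitions.R) -> Rdefinitions.R)
    (theta : forall i : 'I_N, Hist -> 'I_(n i) -> Rdefinitions.R -> Rdefinitions.R)
    (alpha : Rdefinitions.R),
    let theta_tran (u : joint_action n) (w : Rdefinitions.R) :=
      Qmix (fun i => theta i (tau i) (u i) w) in
    (forall i, 0 < n i)%N /\
        0 < alpha <= 1 /\
        mix_monotone Qmix /\
        (forall i h a, is_quantile (theta i h a)) /\
        (forall u, is_quantile (theta_tran u)) /\
        (forall i, is_singleton (argmax_set
            (fun a => CVaR alpha (theta i (tau i) a)))) /\
        is_singleton (argmax_set (fun u => CVaR alpha (theta_tran u))) /\
      ~ RIGM (CVaR alpha) (fun i a => theta i (tau i) a) theta_tran.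
Proof.
pose R := Rdefinitions.R.
pose n : 'I_1 -> nat := fun _ => 2%N.
exists 1%N, n, unit, (fun _ => tt), (fun x => Num.min (x ord0) (0:R)).
exists (fun i h (a : 'I_(n i)) => step R (vA R a) (vB R a)), 1.
move=> theta_tran.
have eT : forall u, theta_tran u =
    step R (Num.min (vA R (u ord0)) 0) (Num.min (vB R (u ord0)) 0).
  by move=> u; apply: funext => w; rewrite /theta_tran min_step.
have AB : forall a : 'I_2, vA R a <= vB R a.
  by move=> a; rewrite /vA /vB; case: ifP => _; lra.
have CVi : forall a : 'I_2, CVaR 1 (step R (vA R a) (vB R a)) =
    (if val a == 0%N then 0 else 1/2)%:E.
  by move=> a; rewrite CVaR1_step /vA /vB; case: ifP => _; congr EFin; lra.
have CVJ : forall u : joint_action n, CVaR 1 (theta_tran u) =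
    (if val (u ord0) == 0%N then 0 else -1/2)%:E.
  move=> u; rewrite eT CVaR1_step /vA /vB; case: ifP => _; congr EFin;
  rewrite !minEle; do ?[case: ifP => ?]; lra.
pose u0 : joint_action n := fun i => (ord0 : 'I_2).
have i_a1 : forall (a : 'I_2), (val a == 0%N) = false -> a = a1.
  by case=> [[|[|m]] Hm] //= _; apply: val_inj.
split; first by [].
split; first by rewrite ltr01 lexx.
split; last split; last split; last split; last split.
- by move=> x y h; apply: le_min2 => //; exact: h.
- by move=> i h a; apply: step_quantile.
- move=> u; rewrite eT; apply: step_quantile; apply: le_min2 => //.
- move=> i; exists a1; apply/seteqP; split => a /=.
    move=> /(_ a1); rewrite !CVi /=.
    case: ifP => [_|/i_a1 -> //]; rewrite lee_fin => h; exfalso; lra.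
  move=> -> v; rewrite !CVi /=; case: ifP => _; rewrite lee_fin; lra.
- exists u0; apply/seteqP; split => u /=.
    move=> /(_ u0); rewrite !CVJ /=.
    case: ifP => [h _|_]; last by rewrite lee_fin => h; exfalso; lra.
    apply: functional_extensionality_dep => i.
    rewrite (ord1 i) /u0; apply: val_inj => /=; exact/eqP.
  move=> -> v; rewrite !CVJ /=; case: ifP => _; rewrite lee_fin; lra.
- rewrite /RIGM => H.
  have : argmax_set (fun u => CVaR 1 (theta_tran u)) u0.
    by move=> v; rewrite !CVJ /=; case: ifP => _; rewrite lee_fin; lra.
  rewrite H /= => /(_ ord0 a1); rewrite !CVi /= lee_fin; lra.
Qed.
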